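(* Let $(\Omega,\mathcal{F},\mathbb{P})$ be a complete probability space and $X=\{X_t\}_{t\geq0}$ a real-valued stochastic process with almost surely continuous paths such that $X_t$ has a density (with respect to Lebesgue measure) for every $t\in(0,\infty)$. Let $AP$ be a set of atomic formulas, each $a\in AP$ interpreted by a Borel set $B_a\subset\mathbb{R}$ whose boundary $\partial B_a$ has Lebesgue measure zero. Then for every MTL-formula $\phi$ there exists $K\in\mathcal{F}\otimes\mathcal{B}([0,\infty))$ such that (i) $\{t : (\omega,t)\in K\}$ is almost surely closed; (ii) $\{t : (\omega,t)\in K\}$ has Lebesgue measure zero almost surely; (iii) $\mathbb{P}(\{\omega : (\omega,t)\in K\})=0$ for every $t\in(0,\infty)$; (iv) $\partial\llbracket\phi\rrbracket_\omega\subset\{t : (\omega,t)\in K\}$.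
   Context: MTL-formulas are built from atomic formulas by $\lnot$, $\wedge$, and until operators $\mathcal{U}_I$ ($I$ an interval in $[0,\infty)$), with $\Diamond_I\phi:=\top\,\mathcal{U}_I\phi$ meaning $\exists s\in I$: $X(\omega),t+s\models\phi$; $X(\omega),t\models a$ iff $X_t(\omega)\in B_a$. $\llbracket\phi\rrbracket_\omega:=\{t\geq0 : X(\omega),t\models\phi\}$, and $\partial$ denotes the boundary in $[0,\infty)$. *)

(* Defs.v *)
From HB Require Import structures.
From mathcomp Require Import all_boot all_order all_algebra.
From mathcomp Require Import all_classical all_reals all_analysis.
Set Implicit Arguments. Unset Strict Implicit. Unset Printing Implicit Defensive.
Import Order.TTheory GRing.Theory Num.Theory.
Import numFieldNormedType.Exports.
Local Open Scope classical_set_scope.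
Local Open Scope ring_scope.

(** MTL formulas over atomic propositions [AP]; [MTrue] is the constant ⊤
    used in Diamond_I phi := ⊤ U_I phi. *)
Inductive mtl (R : realType) (AP : Type) : Type :=
| MTrue : mtl R AP
| MAtom : AP -> mtl R AP
| MNot : mtl R AP -> mtl R AP
| MAnd : mtl R AP -> mtl R AP -> mtl R AP
| MUntil : interval R -> mtl R AP -> mtl R AP -> mtl R AP.

Arguments MTrue {R AP}.

Fixpoint mtl_wf (R : realType) (AP : Type) (phi : mtl R AP) : Prop :=
  match phi with
  | MTrue => True
  | MAtom _ => True
  | MNot f => mtl_wf f
  | MAnd f g => mtl_wf f /\ mtl_wf g
  | MUntil J f g => (forall s : R, s \in J -> 0 <= s) /\ mtl_wf f /\ mtl_wf g
  end.

Fixpoint mtl_sat (R : realType) (AP : Type) (B : AP -> set R) (x : R -> R)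
    (phi : mtl R AP) (t : R) : Prop :=
  match phi with
  | MTrue => True
  | MAtom a => B a (x t)
  | MNot f => ~ mtl_sat B x f t
  | MAnd f g => mtl_sat B x f t /\ mtl_sat B x g t
  | MUntil J f g => exists s : R, s \in J /\ mtl_sat B x g (t + s) /\
       (forall u : R, 0 < u < s -> mtl_sat B x f (t + u))
  end.

Definition mtl_sem (R : realType) (AP : Type) (B : AP -> set R) (x : R -> R)
    (phi : mtl R AP) : set R :=
  [set t | 0 <= t /\ mtl_sat B x phi t].

Definition bdry0 (R : realType) (A : set R) : set R :=
  [set t | 0 <= t /\ forall e : R, 0 < e ->
     (exists u, 0 <= u /\ `|u - t| < e /\ A u) /\
     (exists u, 0 <= u /\ `|u - t| < e /\ ~ A u)].

Definition bdry (R : realType) (A : set R) : set R :=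
  closure A `\` interior A.

Definition has_density d (T : measurableType d) (R : realType)
    (P : probability T R) (Y : T -> R) : Prop :=
  exists f : R -> R, measurable_fun setT f /\ (forall x, 0 <= f x) /\
    forall A : set R, measurable A ->
      P (Y @^-1` A) = (\int[@lebesgue_measure R]_(x in A) (f x)%:E)%E.

(* Main.v *)
Require Import Defs.
From HB Require Import structures.
From mathcomp Require Import all_boot all_order all_algebra.
From mathcomp Require Import all_classical all_reals all_analysis.
From mathcomp Require Import lra ring.
Import Order.TTheory GRing.Theory Num.Theory.
Import numFieldNormedType.Exports.
Local Open Scope classical_set_scope.
Local Open Scope ring_scope.
Set Implicit Arguments. Unset Strict Implicit.
Section Itv.
Variable R : realType.
Lemma minl (a b : R) : Num.min a b <= a. Proof. by rewrite ge_min lexx. Qed.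
Lemma minr (a b : R) : Num.min a b <= b. Proof. by rewrite ge_min lexx orbT. Qed.
Lemma maxl (a b : R) : a <= Num.max a b. Proof. by rewrite le_max lexx. Qed.
Lemma maxr (a b : R) : b <= Num.max a b. Proof. by rewrite le_max lexx orbT. Qed.

Definition lo (l : itv_bound R) (x : R) : bool :=
  match l with BSide b a => if b then a <= x else a < x | BInfty b => b end.
Definition up (u : itv_bound R) (x : R) : bool :=
  match u with BSide b c => if ~~ b then x <= c else x < c | BInfty b => ~~ b end.
Definition lend (l : itv_bound R) : seq R :=
  match l with BSide _ a => [:: a] | _ => [::] end.
Definition ends (J : interval R) : seq R :=
  match J with Interval l u => lend l ++ lend u end.

Lemma memJ x l u : (x \in Interval l u) = lo l x && up u x.
Proof. by rewrite in_itv; case: l => [[] a|[]]; case: u => [[] c|[]]. Qed.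

Lemma lo_mono l x y : lo l x -> x <= y -> lo l y.
Proof.
case: l => [[] a|[]] //= ax xy; [exact: le_trans xy|exact: lt_le_trans xy].
Qed.
Lemma up_mono u x y : up u y -> x <= y -> up u x.
Proof.
case: u => [[] c|[]] //= yc xy; [exact: le_lt_trans yc|exact: le_trans yc].
Qed.

Lemma lo_open l s : lo l s -> (forall a, a \in lend l -> s != a) ->
  exists d, 0 < d /\ forall x, s - d < x -> lo l x.
Proof.
case: l => [b a|[]] //= ls ne; last by exists 1.
have sa : a < s.
  by case: b ls => // ls; rewrite lt_neqAle ls andbT eq_sym ne // mem_head.
exists (s - a); split; first by rewrite subr_gt0.
move=> x; rewrite opprB addrCA subrr addr0 => ax.
by case: b {ls} => //; exact: ltW.
Qed.

Lemma up_open u s : up u s -> (forall a, a \in lend u -> s != a) ->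
  exists d, 0 < d /\ forall x, x < s + d -> up u x.
Proof.
case: u => [b c|[]] //= us ne; last by exists 1.
have sc : s < c.
  by case: b us => //= us; rewrite lt_neqAle us andbT ne // mem_head.
exists (c - s); split; first by rewrite subr_gt0.
move=> x; rewrite addrCA subrr addr0 => xc.
by case: b {us} => //=; exact: ltW.
Qed.

Lemma lo_cross l s x : lo l s -> ~~ lo l x ->
  exists a, a \in lend l /\ x <= a <= s /\ (forall y, a < y -> lo l y).
Proof.
move=> ls lx; have xs : x < s.
  by rewrite ltNge; apply: contra lx => sx; exact: lo_mono ls sx.
case: l ls lx => [b a|[]] //= ls lx; exists a; split; first exact: mem_head.
split; last by move=> y ay; case: b {ls lx} => //; exact: ltW.
case: b ls lx => /= ls lx.
  by rewrite ls andbT; move: lx; rewrite -ltNge => /ltW.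
by rewrite (ltW ls) andbT leNgt.
Qed.

Lemma up_cross u s x : up u s -> ~~ up u x ->
  exists c, c \in lend u /\ s <= c <= x /\ (forall y, y < c -> up u y).
Proof.
move=> us ux; have sx : s < x.
  by rewrite ltNge; apply: contra ux => xs; exact: up_mono us xs.
case: u us ux => [b c|[]] //= us ux; exists c; split; first exact: mem_head.
split; last by move=> y yc; case: b {us ux} => //=; exact: ltW.
case: b us ux => /= us ux.
  by rewrite (ltW us) /= leNgt.
by rewrite us /=; move: ux; rewrite -ltNge => /ltW.
Qed.

Definition wfJ (J : interval R) := forall s : R, s \in J -> 0 <= s.

Lemma ends_ge0 J s c : wfJ J -> s \in J -> c \in ends J -> 0 <= c.
Proof.
case: J => l u wf sJ; have s0 := wf s sJ; move: sJ.
rewrite memJ => /andP[ls us]; rewrite mem_cat => /orP[].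
- move: wf ls; case: l => [b a|[]] //= wf ls; rewrite inE => /eqP->.
  rewrite leNgt; apply/negP => a0.
  have : 0 <= a / 2.
    apply: (wf); rewrite memJ; apply/andP; split.
      by case: (b) => /=; [apply: ltW|]; lra.
    by apply: up_mono us _; lra.
  lra.
- move: wf us; case: u => [b a|[]] //= wf us; rewrite inE => /eqP->.
  case: b us wf => /= us _; [exact: ltW (le_lt_trans s0 us)|exact: le_trans us].
Qed.

Lemma J_open J s : s \in J -> s \notin ends J ->
  exists d, 0 < d /\ forall x, `|x - s| < d -> x \in J.
Proof.
case: J => l u; rewrite memJ /= mem_cat negb_or => /andP[ls us] /andP[nl nu].
have [d1 [d10 H1]] : exists d, 0 < d /\ forall x, s - d < x -> lo l x.
  by apply: lo_open => // a al; apply: contraNneq nl => ->.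
have [d2 [d20 H2]] : exists d, 0 < d /\ forall x, x < s + d -> up u x.
  by apply: up_open => // a al; apply: contraNneq nu => ->.
exists (Num.min d1 d2); split; first by rewrite lt_min d10 d20.
move=> x; rewrite ltr_norml => /andP[h1 h2]; rewrite memJ; apply/andP; split.
  by apply: H1; have := minl d1 d2; lra.
by apply: H2; have := minr d1 d2; lra.
Qed.

Lemma J_cross J s s0 d : s \in J -> s0 \notin J -> 0 < d ->
  exists c, c \in ends J /\ ((s <= c <= s0) \/ (s0 <= c <= s)) /\
    exists s', s' \in J /\ ((s <= s' <= c) \/ (c <= s' <= s)) /\ `|s' - c| < d.
Proof.
case: J => l u; rewrite !memJ /= => /andP[ls us]; rewrite negb_and => /orP[nl|nu] d0.
- have [a [al [/andP[s0a a_s] Ha]]] := lo_cross ls nl.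
  exists a; split; first by rewrite mem_cat al.
  split; first by right; rewrite s0a a_s.
  have [sad|sad] := leP s (a + d / 2).
    exists s; split; first by rewrite memJ ls us.
    split; first by right; rewrite a_s lexx.
    by rewrite ltr_norml; apply/andP; split; lra.
  exists (a + d / 2); split.
    rewrite memJ; apply/andP; split; first by apply: Ha; lra.
    by apply: up_mono us _; lra.
  split; first by right; apply/andP; split; lra.
  by rewrite ltr_norml; apply/andP; split; lra.
- have [c [cu [/andP[sc cs0] Hc]]] := up_cross us nu.
  exists c; split; first by rewrite mem_cat cu orbT.
  split; first by left; rewrite sc cs0.
  have [scd|scd] := leP (c - d / 2) s.
    exists s; split; first by rewrite memJ ls us.
    split; first by left; rewrite sc lexx.
    by rewrite ltr_norml; apply/andP; split; lra.
  exists (c - d / 2); split.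
    rewrite memJ; apply/andP; split; last by apply: Hc; lra.
    by apply: lo_mono ls _; lra.
  split; first by left; apply/andP; split; lra.
  by rewrite ltr_norml; apply/andP; split; lra.
Qed.

End Itv.
Section Comb.
Variable R : realType.

Lemma cont0 (x : R -> R) (hx : {within `[0, +oo[, continuous x}) (t : R) (A : set R) :
  0 <= t -> nbhs (x t) A ->
  exists e : R, 0 < e /\ forall u, 0 <= u -> `|u - t| < e -> A (x u).
Proof.
move=> t0 nA.
have := hx t.
move=> /(_ A nA).
move=> H.
have H2 : within `[0, +oo[ (nbhs t) (x @^-1` A).
  rewrite nbhs_subspace_in; last by rewrite /= in_itv /= andbT.
  exact: H.
have [e e0 He] := H2.
exists e; split => // u u0 ut.
apply: He => /=; last by rewrite in_itv /= u0.
by rewrite distrC.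
Qed.


Definition bd (P : R -> Prop) (t : R) := 0 <= t /\ forall e : R, 0 < e ->
  (exists u, 0 <= u /\ `|u - t| < e /\ P u) /\
  (exists u, 0 <= u /\ `|u - t| < e /\ ~ P u).

Definition lcr (P : R -> Prop) (t r : R) :=
  (forall u, 0 <= u -> `|u - t| < r -> P u) \/
  (forall u, 0 <= u -> `|u - t| < r -> ~ P u).

Lemma nbd_lcr P t : 0 <= t -> ~ bd P t -> exists r, 0 < r /\ lcr P t r.
Proof.
move=> t0 nb; apply: contrapT => H; apply: nb; split => // e e0; split.
- apply: contrapT => H1; apply: H; exists e; split => //; right => u u0 ue Pu.
  by apply: H1; exists u.
- apply: contrapT => H1; apply: H; exists e; split => //; left => u u0 ue.
  by apply: contrapT => Pu; apply: H1; exists u.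
Qed.

Lemma lcr_le P t r r' : r' <= r -> lcr P t r -> lcr P t r'.
Proof.
move=> rr [H|H]; [left|right] => u u0 ut; apply: H => //; exact: lt_le_trans ut rr.
Qed.

Lemma lcr_nbd P t r : 0 < r -> lcr P t r -> ~ bd P t.
Proof.
move=> r0 [H|H] [t0 /(_ r r0) [[u [u0 [ut Pu]]] [v [v0 [vt Pv]]]]].
- by apply: Pv; apply: H.
- by apply: (H u).
Qed.

Lemma common_radius (l : seq R) (Q : R -> R -> Prop) :
  (forall c r r', 0 < r' -> r' <= r -> Q c r -> Q c r') ->
  (forall c, c \in l -> exists r, 0 < r /\ Q c r) ->
  exists r, 0 < r /\ forall c, c \in l -> Q c r.
Proof.
move=> mono; elim: l => [|a l IH] H.
  by exists 1; split => // c; rewrite in_nil.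
have [ra [ra0 Qa]] := H a (mem_head a l).
have [rl [rl0 Ql]] : exists r, 0 < r /\ forall c, c \in l -> Q c r.
  by apply: IH => c cl; apply: H; rewrite in_cons cl orbT.
exists (Num.min ra rl); split; first by rewrite lt_min ra0 rl0.
move=> c; rewrite in_cons => /orP[/eqP->|cl].
  by apply: mono Qa; [rewrite lt_min ra0 rl0|rewrite ge_min lexx].
by apply: mono (Ql c cl); [rewrite lt_min ra0 rl0|rewrite ge_min lexx orbT].
Qed.

Lemma bd_not P t : bd (fun u => ~ P u) t -> bd P t.
Proof.
move=> [t0 H]; split => // e e0; have [[u [u0 [ut Pu]]] [v [v0 [vt Pv]]]] := H e e0.
split; first by exists v; split => //; split => //; apply: contrapT.
by exists u.
Qed.

Lemma bd_and P Q t : bd (fun u => P u /\ Q u) t -> bd P t \/ bd Q t.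
Proof.
move=> b; have t0 := b.1; apply: contrapT => /not_orP[nP nQ].
have [r1 [r10 H1]] := nbd_lcr t0 nP.
have [r2 [r20 H2]] := nbd_lcr t0 nQ.
have r0 : 0 < Num.min r1 r2 by rewrite lt_min r10 r20.
apply: (@lcr_nbd _ t (Num.min r1 r2) r0 _ b).
have /(lcr_le (minl r1 r2)) [A1|A1] := H1.
  have /(lcr_le (minr r1 r2)) [A2|A2] := H2.
    by left => u u0 ut; split; [apply: A1|apply: A2].
  by right => u u0 ut [_ Qu]; apply: (A2 u).
by right => u u0 ut [Pu _]; apply: (A1 u).
Qed.

Lemma bd_atom (x : R -> R) (hx : {within `[0, +oo[, continuous x}) (A : set R) t :
  bd (fun u => A (x u)) t -> bdry A (x t).
Proof.
move=> b; have t0 := b.1; apply: contrapT => nb.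
have [nc|ni] : ~ closure A (x t) \/ interior A (x t).
  by apply: contrapT => /not_orP[h1 h2]; apply: nb; split => //; apply: contrapT.
- have [B [nB AB]] : exists B, nbhs (x t) B /\ A `&` B = set0.
    apply: contrapT => H; apply: nc => B nB; apply/set0P/eqP => AB0.
    by apply: H; exists B; split => //; apply/eqP.
  have [e [e0 He]] := cont0 hx t0 nB.
  apply: (@lcr_nbd _ t e e0 _ b); right => u u0 ut Au.
  have : (A `&` B) (x u) by split => //; apply: He.
  by rewrite AB.
- have [e [e0 He]] := cont0 hx t0 ni.
  by apply: (@lcr_nbd _ t e e0 _ b); left => u u0 ut; apply: He.
Qed.


Lemma absI (x y : R) : - y < x -> x < y -> `|x| < y.
Proof. by move=> h1 h2; rewrite ltr_norml h1 h2. Qed.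
Lemma absE (x y : R) : `|x| < y -> - y < x /\ x < y.
Proof. by rewrite ltr_norml => /andP. Qed.

Lemma lcr_pos P t r : lcr P t r -> (exists w, 0 <= w /\ `|w - t| < r /\ P w) ->
  forall v, 0 <= v -> `|v - t| < r -> P v.
Proof. by move=> [H|H] // [w [w0 [wt Pw]]]; exfalso; exact: (H w). Qed.

Definition U (F G : R -> Prop) (J : interval R) t :=
  exists s, s \in J /\ G (t + s) /\ forall u, 0 < u < s -> F (t + u).

Lemma Fnear (F : R -> Prop) t0 s r : 0 <= t0 -> 0 < s -> 0 < r ->
  (forall u, 0 < u < s -> F (t0 + u)) -> lcr F t0 r ->
  forall v, 0 <= v -> `|v - t0| < r -> F v.
Proof.
move=> t00 s0 r0 HF H; apply: lcr_pos H _.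
have m0 : 0 < Num.min s r by rewrite lt_min s0 r0.
have ms := minl s r; have mr := minr s r.
exists (t0 + Num.min s r / 2); split; first lra.
split; first by apply: absI; lra.
by apply: HF; apply/andP; split; lra.
Qed.

Lemma caseA F G J t0 r : wfJ J -> 0 <= t0 -> 0 < r -> lcr F t0 r ->
  (forall c, c \in ends J -> lcr F (t0 + c) r /\ lcr G (t0 + c) r) ->
  U F G J t0 -> exists e, 0 < e /\ forall t, 0 <= t -> `|t - t0| < e -> U F G J t.
Proof.
move=> wf t00 r0 HF0 HE [s [sJ [Gs Fs]]].
have s0 : 0 <= s := wf s sJ.
have [sE|sE] := boolP (s \in ends J); last first.
  have [d [d0 Hd]] := J_open sJ sE.
  have spos : 0 < s.
    rewrite lt_neqAle s0 andbT; apply/negP => /eqP s0'.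
    have : 0 <= - (d / 2) by apply: wf; apply: Hd; rewrite -s0' subr0 normrN; apply: absI; lra.
    lra.
  have HFa := Fnear t00 spos r0 Fs HF0.
  exists (Num.min r d); split; first by rewrite lt_min r0 d0.
  have mr := minl r d; have md := minr r d.
  move=> t t0' /absE [h1 h2].
  exists (s + t0 - t); split.
    by apply: Hd; apply: absI; lra.
  split; first by have -> : t + (s + t0 - t) = t0 + s by ring.
  move=> u /andP [u0 us].
  have [vt|vt] := leP (t + u) t0.
    by apply: HFa; [lra|apply: absI; lra].
  have -> : t + u = t0 + (t + u - t0) by ring.
  by apply: Fs; apply/andP; split; lra.
have [HG _] : lcr G (t0 + s) r /\ True by split => //; exact: (HE s sE).2.
have HGa : forall v, 0 <= v -> `|v - (t0 + s)| < r -> G v.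
  apply: lcr_pos HG _; exists (t0 + s); split; first lra.
  by split => //; rewrite subrr normr0.
exists r; split => //.
move=> t t0' /absE [h1 h2].
exists s; split => //; split.
  by apply: HGa; [lra|apply: absI; lra].
move=> u /andP [u0 us].
have spos : 0 < s by lra.
have HFa := Fnear t00 spos r0 Fs HF0.
have HFb : forall v, 0 <= v -> `|v - (t0 + s)| < r -> F v.
  apply: lcr_pos (HE s sE).1 _.
  have m0 : 0 < Num.min s r by rewrite lt_min spos r0.
  have ms := minl s r; have mr := minr s r.
  exists (t0 + s - Num.min s r / 2); split; first lra.
  split; first by apply: absI; lra.
  have -> : t0 + s - Num.min s r / 2 = t0 + (s - Num.min s r / 2) by ring.
  by apply: Fs; apply/andP; split; lra.
have [vt|vt] := leP (t + u) t0.
  by apply: HFa; [lra|apply: absI; lra].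
have [vs|vs] := ltP (t + u) (t0 + s).
  have -> : t + u = t0 + (t + u - t0) by ring.
  by apply: Fs; apply/andP; split; lra.
by apply: HFb; [lra|apply: absI; lra].
Qed.

Lemma caseB F G J t0 r : wfJ J -> 0 <= t0 -> 0 < r -> lcr F t0 r ->
  (forall c, c \in ends J -> lcr F (t0 + c) r /\ lcr G (t0 + c) r) ->
  ~ U F G J t0 -> forall t, 0 <= t -> `|t - t0| < r / 4 -> ~ U F G J t.
Proof.
move=> wf t00 r0 HF0 HE nU t t0' /absE[h1 h2] [s [sJ [Gs Fs]]].
have s0 : 0 <= s := wf s sJ.
case: HF0 => [HFa|HFn].
- have [s0J|s0J] := boolP ((s + t - t0) \in J).
    apply: nU; exists (s + t - t0); split => //; split.
      by have -> : t0 + (s + t - t0) = t + s by ring.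
    move=> u /andP[u0 us]; have [vt|vt] := leP (t0 + u) t.
      by apply: HFa; [lra|apply: absI; lra].
    have -> : t0 + u = t + (t0 + u - t) by ring.
    by apply: Fs; apply/andP; split; lra.
  have r4 : 0 < r / 4 by lra.
  have [c [cE [cb [s' [s'J [s'b /absE[s'c1 s'c2]]]]]]] := J_cross sJ s0J r4.
  have c0 := ends_ge0 wf sJ cE.
  have [HFc HGc] := HE c cE.
  have s'0 := wf s' s'J.
  have cb' : (s <= c /\ c <= s + t - t0) \/ (s + t - t0 <= c /\ c <= s).
    by case: cb => /andP[? ?]; [left|right].
  have s'b' : (s <= s' /\ s' <= c) \/ (c <= s' /\ s' <= s).
    by case: s'b => /andP[? ?]; [left|right].
  have HGa : forall v, 0 <= v -> `|v - (t0 + c)| < r -> G v.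
    apply: lcr_pos HGc _; exists (t + s); split; first lra.
    by split => //; apply: absI; case: cb' => -[? ?]; lra.
  apply: nU; exists s'; split => //; split.
    by apply: HGa; [lra|apply: absI; lra].
  move=> u /andP[u0 us'].
  have [vt|vt] := leP (t0 + u) t.
    by apply: HFa; [lra|apply: absI; lra].
  have [vg|vg] := ltP (t0 + u) (t + s).
    have -> : t0 + u = t + (t0 + u - t) by ring.
    by apply: Fs; apply/andP; split; lra.
  have [vr|vr] := ltP (t0 + u) (t0 + r).
    by apply: HFa; [lra|apply: absI; lra].
  have spos : 0 < s by case: cb' => -[? ?]; case: s'b' => -[? ?]; lra.
  have HFb : forall v, 0 <= v -> `|v - (t0 + c)| < r -> F v.
    apply: lcr_pos HFc _.
    have m0 : 0 < Num.min s (r / 2) by rewrite lt_min spos; lra.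
    have ms := minl s (r / 2); have mr := minr s (r / 2).
    exists (t + (s - Num.min s (r / 2) / 2)); split; first lra.
    split; first by apply: absI; case: cb' => -[? ?]; lra.
    by apply: Fs; apply/andP; split; lra.
  by apply: HFb; [lra|apply: absI; case: cb' => -[? ?]; case: s'b' => -[? ?]; lra].
- have s_0 : s = 0.
    apply/eqP; rewrite eq_le s0 andbT leNgt; apply/negP => spos.
    have m0 : 0 < Num.min s (r / 4) by rewrite lt_min spos; lra.
    have ms := minl s (r / 4); have mr := minr s (r / 4).
    apply: (HFn (t + Num.min s (r / 4) / 2)); first lra.
      by apply: absI; lra.
    by apply: Fs; apply/andP; split; lra.
  subst s.
  have E0 : 0 \in ends J.
    apply: contraT => nE; have [d [d0 Hd]] := J_open sJ nE.
    have : 0 <= - (d / 2) by apply: wf; apply: Hd; rewrite subr0 normrN; apply: absI; lra.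
    lra.
  have [_ HG] := HE 0 E0; rewrite addr0 in HG.
  rewrite addr0 in Gs.
  case: HG => [HGa|HGn].
    apply: nU; exists 0; split => //; split.
      by rewrite addr0; apply: HGa => //; rewrite subrr normr0.
    by move=> u /andP[? ?]; lra.
  by apply: (HGn t) => //; apply: absI; lra.
Qed.

Lemma bd_until F G J t0 : wfJ J -> bd (U F G J) t0 ->
  bd F t0 \/ exists c, c \in ends J /\ (bd F (t0 + c) \/ bd G (t0 + c)).
Proof.
move=> wf b; have t00 := b.1; apply: contrapT => /not_orP[nF nE].
have HE : forall c, c \in ends J -> ~ bd F (t0 + c) /\ ~ bd G (t0 + c).
  move=> c cE; split => H; apply: nE; exists c; split => //; [left|right] => //.
have [s1 s1J] : exists s, s \in J.
  have [_ /(_ 1 ltr01) [[u [_ [_ [s [sJ _]]]]] _]] := b.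
  by exists s.
have [r1 [r10 H1]] := nbd_lcr t00 nF.
have [r2 [r20 H2]] : exists r, 0 < r /\ forall c, c \in ends J ->
    lcr F (t0 + c) r /\ lcr G (t0 + c) r.
  apply: common_radius.
    move=> c r r' r'0 rr [h1 h2]; split; exact: lcr_le rr _.
  move=> c cE; have c0 := ends_ge0 wf s1J cE.
  have tc0 : 0 <= t0 + c by apply: addr_ge0.
  have [hF hG] := HE c cE.
  have [ra [ra0 Ha]] := nbd_lcr tc0 hF.
  have [rb [rb0 Hb]] := nbd_lcr tc0 hG.
  exists (Num.min ra rb); split; first by rewrite lt_min ra0 rb0.
  by split; [exact: lcr_le (minl ra rb) Ha|exact: lcr_le (minr ra rb) Hb].
set r := Num.min r1 r2.
have r0 : 0 < r by rewrite lt_min r10 r20.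
have HF0 : lcr F t0 r := lcr_le (minl r1 r2) H1.
have HE' : forall c, c \in ends J -> lcr F (t0 + c) r /\ lcr G (t0 + c) r.
  by move=> c cE; have [h h'] := H2 c cE; split; exact: lcr_le (minr r1 r2) _.
have [Ut0|nUt0] := pselect (U F G J t0).
  have [e [e0 He]] := caseA wf t00 r0 HF0 HE' Ut0.
  by apply: (@lcr_nbd _ t0 e e0 _ b); left.
have r4 : 0 < r / 4 by lra.
apply: (@lcr_nbd _ t0 (r / 4) r4 _ b); right.
exact: caseB wf t00 r0 HF0 HE' nUt0.
Qed.

End Comb.

Section MTL.
Variables (R : realType) (AP : Type) (B : AP -> set R).

Fixpoint alist (phi : mtl R AP) : seq (AP * R) :=
  match phi with
  | MTrue => [::]
  | MAtom a => [:: (a, 0)]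
  | MNot f => alist f
  | MAnd f g => alist f ++ alist g
  | MUntil J f g => let L := alist f ++ alist g in
      L ++ flatten [seq [seq (p.1, p.2 + Num.max c 0) | p <- L] | c <- ends J]
  end.

Lemma In_shift (L : seq (AP * R)) (l : seq R) c p : c \in l -> List.In p L ->
  List.In (p.1, p.2 + Num.max c 0)
    (flatten [seq [seq (p.1, p.2 + Num.max c 0) | p <- L] | c <- l]).
Proof.
elim: l => // a l IH; rewrite in_cons => /orP[/eqP->|cl] pL /=; apply/List.in_app_iff.
  by left; apply: List.in_map.
by right; apply: IH.
Qed.

Lemma alist_ge0 phi p : List.In p (alist phi) -> 0 <= p.2.
Proof.
elim: phi p => [|a|f IH|f IHf g IHg|J f IHf g IHg] p //=.
- by case=> // <-.
- exact: IH.
- by move=> /List.in_app_iff[]; [apply: IHf|apply: IHg].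
- have HL : forall q, List.In q (alist f ++ alist g) -> 0 <= q.2.
    by move=> q /List.in_app_iff[]; [apply: IHf|apply: IHg].
  move=> /List.in_app_iff[]; first exact: HL.
  elim: (ends J) => //= c l IH /List.in_app_iff[]; last exact: IH.
  move=> /List.in_map_iff[q [<- qL]] /=.
  by apply: addr_ge0; [exact: HL|exact: maxr].
Qed.

Lemma bd_mtl (x : R -> R) (hx : {within `[0, +oo[, continuous x}) (phi : mtl R AP) :
  mtl_wf phi -> forall t, bd (mtl_sat B x phi) t ->
  exists p, List.In p (alist phi) /\ bdry (B p.1) (x (t + p.2)).
Proof.
elim: phi => [|a|f IH|f IHf g IHg|J f IHf g IHg] /= wf t b.
- by have [_ /(_ 1 ltr01) [_ [u [_ [_ []]]]]] := b.
- by exists (a, 0); split; [left|rewrite addr0; exact: bd_atom b].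
- by apply: IH => //; apply: bd_not.
- case: wf => wf1 wf2; case: (bd_and b) => /[dup] H.
    by move=> /(IHf wf1) [p [pL pb]]; exists p; split => //; apply/List.in_app_iff; left.
  by move=> /(IHg wf2) [p [pL pb]]; exists p; split => //; apply/List.in_app_iff; right.
- case: wf => wfJ' [wf1 wf2].
  have wJ : wfJ J by move=> s sJ; apply: wfJ'.
  have [s1 s1J] : exists s, s \in J.
    have [_ /(_ 1 ltr01) [[u [_ [_ [s [sJ _]]]]] _]] := b.
    by exists s.
  have HL : forall t, (exists p, List.In p (alist f) /\ bdry (B p.1) (x (t + p.2))) \/
      (exists p, List.In p (alist g) /\ bdry (B p.1) (x (t + p.2))) ->
      exists p, List.In p (alist f ++ alist g) /\ bdry (B p.1) (x (t + p.2)).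
    move=> t' [] [p [pL pb]]; exists p; split => //; apply/List.in_app_iff; [left|right] => //.
  have := @bd_until R (mtl_sat B x f) (mtl_sat B x g) J t wJ b.
  case=> [/(IHf wf1) [p [pL pb]]|[c [cE Hc]]].
    have [q [qL qb]] := HL t (or_introl (ex_intro _ p (conj pL pb))).
    by exists q; split => //; apply/List.in_app_iff; left.
  have [q [qL qb]] : exists p, List.In p (alist f ++ alist g) /\ bdry (B p.1) (x (t + c + p.2)).
    by apply: HL; case: Hc => [/(IHf wf1)|/(IHg wf2)]; [left|right].
  exists (q.1, q.2 + Num.max c 0); split.
    by apply/List.in_app_iff; right; apply: In_shift.
  have c0 := ends_ge0 wJ s1J cE.
  rewrite /= (max_l c0).
  by have -> : t + (q.2 + c) = t + c + q.2 by ring.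
Qed.

Lemma bdry0_bd (x : R -> R) (phi : mtl R AP) t :
  bdry0 (mtl_sem B x phi) t -> bd (mtl_sat B x phi) t.
Proof.
move=> [t0 H]; split => // e e0; have [[u [u0 [ut [_ Su]]]] [v [v0 [vt Sv]]]] := H e e0.
split; first by exists u.
by exists v; split => //; split => // Sv'; apply: Sv.
Qed.

End MTL.

Section Approx.
Variable R : realType.

Lemma closed_bdry (A : set R) : closed (bdry A).
Proof.
rewrite /bdry setDE; apply: closedI; first exact: closed_closure.
by rewrite closedC; exact: open_interior.
Qed.

Lemma ball_absE (x y e : R) : ball x e y = (`|x - y| < e).
Proof. by rewrite -ball_normE. Qed.

Lemma tri3 (a b dd e1 e2 E : R) : `|a - b| < e1 -> `|b - dd| < e2 -> e1 + e2 <= E ->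
  `|a - dd| < E.
Proof. by move=> /absE[h1 h2] /absE[h3 h4] h; apply: absI; lra. Qed.

Lemma half_le (m e0 eps : R) : m <= e0 / 2 -> eps < m -> e0 / 2 + eps <= e0.
Proof. lra. Qed.

Lemma approx (x : R -> R) (hx : {within `[0, +oo[, continuous x}) (D : set R)
  (cD : closed D) c t : 0 <= c -> 0 < t ->
  D (x (t + c)) <-> forall k : nat, exists q : rat, 0 <= (ratr q : R) /\
     (exists2 d, D d & `|x (ratr q + c) - d| < (k.+1%:R)^-1) /\
     `|ratr q - t| < (k.+1%:R)^-1.
Proof.
move=> c0 t0; have tc0 : 0 <= t + c by rewrite addr_ge0 // ltW.
split.
- move=> Dx k; set eps := (k.+1%:R : R)^-1.
  have ek : 0 < eps by rewrite invr_gt0.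
  have [e1 [e10 He1]] := cont0 hx tc0 (nbhsx_ballx (x (t + c)) _ ek).
  have m0 : 0 < Num.min e1 eps by rewrite lt_min e10 ek.
  have m1 := minl e1 eps; have m2 := minr e1 eps.
  have tm : t < t + Num.min e1 eps by lra.
  have [q] := rat_in_itvoo tm; rewrite in_itv /= => /andP[h1' h2'].
  have h1 : t < (ratr q : R) by [].
  have h2 : (ratr q : R) < t + Num.min e1 eps by [].
  clear h1' h2'.
  exists q; split; first lra.
  split; last by apply: absI; lra.
  exists (x (t + c)) => //.
  have u0 : 0 <= ratr q + c by lra.
  have u1 : `|ratr q + c - (t + c)| < e1 by apply: absI; lra.
  have := He1 (ratr q + c) u0 u1.
  by rewrite ball_absE distrC.
- move=> H; apply: contrapT => nD.
  have oC : open (~` D) by rewrite -closedC setCK.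
  have nb : nbhs (x (t + c)) (~` D) by apply: open_nbhs_nbhs; split.
  have [e0 e00 He0] := (nbhs_ballP (x (t + c)) (~` D)).1 nb.
  have e02 : 0 < e0 / 2 by have e0' : 0 < e0 := e00; lra.
  have [e1 [e10 He1]] := cont0 hx tc0 (nbhsx_ballx (x (t + c)) _ e02).
  set m := Num.min e1 (e0 / 2).
  have m0 : 0 < m by rewrite lt_min e10 e02.
  have m1 : m <= e1 := minl e1 (e0 / 2); have m2 : m <= e0 / 2 := minr e1 (e0 / 2).
  set k := Num.Def.archi_bound m^-1.
  have hk0 : m^-1 < k%:R by apply: archi_boundP; rewrite invr_ge0 ltW.
  have hk : (k.+1%:R : R)^-1 < m.
    rewrite invf_plt ?posrE ?ltr0n //.
    by rewrite -addn1 natrD; lra.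
  set eps := (k.+1%:R : R)^-1 in hk.
  have [q [q0 [[dd Dd hd] hq]]] := H k; rewrite -/eps in hd hq.
  set rq := (ratr q : R) in q0 hd hq *.
  have u0 : 0 <= rq + c by apply: addr_ge0.
  have u1 : `|rq + c - (t + c)| < e1.
    have -> : rq + c - (t + c) = rq - t by ring.
    exact: lt_trans hq (lt_le_trans hk m1).
  have := He1 (rq + c) u0 u1; rewrite ball_absE => hb.
  have : ball (x (t + c)) e0 dd.
    by rewrite ball_absE; apply: tri3 hb hd _; exact: half_le m2 hk.
  by move/He0.
Qed.
End Approx.

Lemma closed_S (R : realType) (x : R -> R) (hx : {within `[0, +oo[, continuous x})
  (D : set R) (cD : closed D) (c : R) : 0 <= c ->
  closed [set t | 0 <= t /\ D (x (t + c))].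
Proof.
move=> c0 t Ct; apply: contrapT => nS.
have [t0|t0] := ltP t 0.
  have t0' : 0 < - t by rewrite oppr_gt0.
  have [u [[u0 _] hu]] := Ct _ (nbhsx_ballx t (- t) t0').
  by move: hu; rewrite ball_absE => /absE[h1 h2]; lra.
have nD : ~ D (x (t + c)) by move=> Dx; apply: nS.
have oC : open (~` D) by rewrite -closedC setCK.
have nb : nbhs (x (t + c)) (~` D) by apply: open_nbhs_nbhs; split.
have tc0 : 0 <= t + c by apply: addr_ge0.
have [e1 [e10 He1]] := cont0 hx tc0 nb.
have [u [[u0 Du] hu]] := Ct _ (nbhsx_ballx t e1 e10).
apply: (He1 (u + c)); first exact: addr_ge0.
  have -> : u + c - (t + c) = - (t - u) by ring.
  by rewrite normrN -ball_absE.
exact: Du.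
Qed.

Lemma closed0 (R : realType) : closed [set (0 : R)].
Proof.
have -> : [set (0 : R)] = [set x : R | x <= 0] `&` [set x | 0 <= x].
  apply/seteqP; split => x /=; first by move=> ->; split.
  by move=> [h1 h2]; apply/eqP; rewrite eq_le h1 h2.
apply: closedI; [exact: closed_le|exact: closed_ge].
Qed.

Section Meas.
Variables (d : measure_display) (T : measurableType d) (R : realType)
  (P : probability T R) (X : R -> T -> R) (AP : Type) (B : AP -> set R) (N : set T).

Definition piece (p : AP * R) : set (T * R) :=
  [set z | ~ N z.1 /\ 0 < z.2 /\ bdry (B p.1) (X (z.2 + p.2) z.1)].

Definition Ul (L : seq (AP * R)) : set (T * R) :=
  [set z | exists2 p, List.In p L & piece p z].

Lemma piece_meas (mX : forall t : R, 0 <= t -> measurable_fun setT (X t))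
  (mN : measurable N)
  (contN : forall w, ~ N w -> {within `[0, +oo[, continuous (fun t : R => X t w)})
  p : 0 <= p.2 -> measurable (piece p).
Proof.
move=> c0; set c := p.2; set D := bdry (B p.1).
pose eps (k : nat) : R := (k.+1%:R)^-1.
pose Dk k := [set y : R | exists2 dd, D dd & `|y - dd| < eps k].
have mDk k : measurable (Dk k).
  apply: measurable_realfun.open_measurable.
  have -> : Dk k = \bigcup_(dd in D) ball dd (eps k).
    apply/seteqP; split => y /=.
      by move=> [dd Dd h]; exists dd => //; rewrite ball_absE distrC.
    by move=> [dd Dd]; rewrite ball_absE distrC => h; exists dd.
  by apply: bigcup_open => dd _; exact: ball_open.
pose A k q := [set w | (0 <= (ratr q : R)) /\ Dk k (X (ratr q + c) w)].
have mA k q : measurable (A k q).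
  have [q0|q0] := boolP (0 <= (ratr q : R)).
    have -> : A k q = X (ratr q + c) @^-1` Dk k.
      by apply/seteqP; split => w /=; [case|split].
    rewrite -[X _ @^-1` _]setTI.
    have qc : 0 <= ratr q + c by apply: addr_ge0.
    exact: (mX _ qc measurableT _ (mDk k)).
  have -> : A k q = set0.
    by apply/seteqP; split => w //= [q0' _]; rewrite q0' in q0.
  exact: measurable0.
pose Iq k q := [set t : R | `|ratr q - t| < eps k].
have mI k q : measurable (Iq k q).
  apply: measurable_realfun.open_measurable.
  have -> : Iq k q = ball (ratr q : R) (eps k).
    by apply/seteqP; split => y /=; rewrite ball_absE.
  exact: ball_open.
have -> : piece p = ((~` N) `*` [set t | 0 < t]) `&`
    \bigcap_k \bigcup_q (A k q `*` Iq k q).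
  apply/seteqP; split => -[w t] /=.
  - move=> [nN [t0 Dx]]; split => //.
    move=> k _; have [q [q0 [hd hq]]] :=
      (approx (contN _ nN) (@closed_bdry _ (B p.1)) c0 t0).1 Dx k.
    by exists q => //; split.
  - move=> [[nN t0] H]; split => //; split => //.
    apply/(approx (contN _ nN) (@closed_bdry _ (B p.1)) c0 t0) => k.
    have [q _ [[q0 hd] hq]] := H k I.
    by exists q; split => //; split.
apply: measurableI.
  apply: measurableX; first exact: measurableC.
  have -> : [set t : R | 0 < t] = `]0, +oo[%classic.
    by apply/seteqP; split => t; rewrite /= in_itv /= andbT.
  exact: measurable_itv.
apply: bigcapT_measurable => k; apply: bigcupT_measurable_rat => q.
exact: measurableX.
Qed.

End Meas.

Section Meas2.
Variables (d : measure_display) (T : measurableType d) (R : realType)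
  (P : probability T R) (X : R -> T -> R) (AP : Type) (B : AP -> set R) (N : set T).
Variable mX : forall t : R, 0 <= t -> measurable_fun setT (X t).
Variable mN : measurable N.
Variable contN : forall w, ~ N w -> {within `[0, +oo[, continuous (fun t : R => X t w)}.
Variable dens : forall t : R, 0 < t -> has_density P (X t).
Variable nullB : forall a : AP, (@lebesgue_measure R) (bdry (B a)) = 0%E.

Lemma piece_null p t : 0 <= p.2 -> 0 < t ->
  P.-negligible [set w | piece X B N p (w, t)].
Proof.
move=> c0 t0; have tc : 0 < t + p.2 by apply: ltr_wpDr.
have mD : measurable (bdry (B p.1)).
  exact: measurable_realfun.closed_measurable (@closed_bdry _ (B p.1)).
exists (X (t + p.2) @^-1` bdry (B p.1)); split.
- by rewrite -[X _ @^-1` _]setTI; apply: mX => //; exact: ltW.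
- have [f [mf [f0 Hf]]] := dens tc.
  rewrite Hf //.
  transitivity (\int[@lebesgue_measure R]_(x in bdry (B p.1)) `|(f x)%:E|)%E.
    by apply: eq_integral => x _; rewrite gee0_abs // lee_fin f0.
  apply: integral_abs_eq0; first exact: mD; last exact: nullB.
  by apply/measurable_realfun.measurable_EFinP; exact: measurable_funS mf.
- by move=> w [_ [_ h]].
Qed.

Lemma Ul_cons p L : Ul X B N (p :: L) = piece X B N p `|` Ul X B N L.
Proof.
apply/seteqP; split => z /=.
  by move=> [q [<-|qL] h]; [left|right; exists q].
by move=> [h|[q qL h]]; [exists p => //; left|exists q => //; right].
Qed.

Lemma Ul_nil : Ul X B N [::] = set0.
Proof. by apply/seteqP; split => z //= [q]. Qed.

Lemma Ul_meas L : (forall p, List.In p L -> 0 <= p.2) -> measurable (Ul X B N L).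
Proof.
elim: L => [|p L IH] hL; first by rewrite Ul_nil.
rewrite Ul_cons; apply: measurableU.
  by apply: piece_meas => //; apply: hL; left.
by apply: IH => q qL; apply: hL; right.
Qed.

Lemma Ul_null L t : (forall p, List.In p L -> 0 <= p.2) -> 0 < t ->
  P.-negligible [set w | Ul X B N L (w, t)].
Proof.
move=> hL t0; elim: L hL => [|p L IH] hL.
  by rewrite Ul_nil; apply: negligibleS (negligible_set0 P) => w.
have h1 := @piece_null p t (hL p (or_introl erefl)) t0.
have h2 := IH (fun q qL => hL q (or_intror qL)).
apply: negligibleS (negligibleU h1 h2) => w /=.
by rewrite Ul_cons => -[h|h]; [left|right].
Qed.

Lemma Ul_ae L : (forall p, List.In p L -> 0 <= p.2) ->
  {ae P, forall w, (@lebesgue_measure R) (xsection (Ul X B N L) w) = 0%E}.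
Proof.
move=> hL; set U := Ul X B N L.
have mU : measurable U := Ul_meas hL.
have hy : forall t, P (ysection U t) = 0%E.
  move=> t; have [t0|t0] := ltP 0 t.
    apply: measure_negligible; first exact: measurable_ysection.
    by apply: negligibleS (Ul_null hL t0) => w; rewrite /ysection /= inE.
  have -> : ysection U t = set0.
    apply/seteqP; split => w //=; rewrite /ysection /= inE.
    by move=> [p _ [_ [tp _]]]; move: tp => /= tp; lra.
  exact: measure0.
have h2 : (P \x^ (@lebesgue_measure R))%E U = 0%E.
  by rewrite /product_measure2; apply: integral0_eq => t _ /=; exact: hy.
have h1 : (P \x (@lebesgue_measure R))%E U = 0%E.
  rewrite (product_measure_unique (m' := (P \x^ (@lebesgue_measure R))%E) _ mU) //.
  by move=> A1 A2 mA1 mA2; exact: product_measure2E.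
have mf := lebesgue_integral_fubini.measurable_fun_xsection (@lebesgue_measure R) mU.
have := (ae_eq_integral_abs P measurableT mf).1.
have -> : (\int[P]_(x in setT) `|(@lebesgue_measure R) (xsection U x)|)%E =
    (P \x (@lebesgue_measure R))%E U.
  by apply: eq_integral => w _; rewrite gee0_abs //; exact: measure_ge0.
move=> /(_ h1); apply: filterS => w /(_ I).
by [].
Qed.

End Meas2.

Lemma closed_C (R : realType) (AP : Type) (B : AP -> set R) (x : R -> R)
  (hx : {within `[0, +oo[, continuous x}) (L : seq (AP * R)) :
  (forall p, List.In p L -> 0 <= p.2) ->
  closed [set t | t = 0 \/ exists2 p, List.In p L & (0 <= t /\ bdry (B p.1) (x (t + p.2)))].
Proof.
elim: L => [|p L IH] hL.
  have -> : [set t : R | t = 0 \/ exists2 p, List.In p [::] &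
      (0 <= t /\ bdry (B p.1) (x (t + p.2)))] = [set 0].
    by apply/seteqP; split => t /=; [case=> // -[]|left].
  exact: closed0.
have -> : [set t | t = 0 \/ exists2 q, List.In q (p :: L) &
      (0 <= t /\ bdry (B q.1) (x (t + q.2)))] =
    [set t | t = 0 \/ exists2 q, List.In q L &
      (0 <= t /\ bdry (B q.1) (x (t + q.2)))] `|`
    [set t | 0 <= t /\ bdry (B p.1) (x (t + p.2))].
  apply/seteqP; split => t /=.
    by move=> [->|[q [<-|qL] h]]; [left; left|right|left; right; exists q].
  by move=> [[->|[q qL h]]|h]; [left|right; exists q => //; right|right; exists p => //; left].
apply: closedU; first by apply: IH => q qL; apply: hL; right.
apply: closed_S => //; first exact: closed_bdry.
by apply: hL; left.
Qed.

Unset Implicit Arguments. Set Strict Implicit.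

Theorem lemma6p14 (d : measure_display) (T : measurableType d) (R : realType)
  (P : probability T R) (X : R -> T -> R) (AP : Type) (B : AP -> set R) :
  measure_is_complete P ->
  (forall t : R, 0 <= t -> measurable_fun setT (X t)) ->
  {ae P, forall w : T, {within `[0, +oo[, continuous (fun t : R => X t w)}} ->
  (forall t : R, 0 < t -> has_density P (X t)) ->
  (forall a : AP, measurable (B a)) ->
  (forall a : AP, (@lebesgue_measure R) (bdry (B a)) = 0%E) ->
  forall phi : mtl R AP, mtl_wf phi ->
  exists K : set (T * R),
    measurable K /\ K `<=` setT `*` `[0, +oo[ /\
    {ae P, forall w : T, closed [set t | K (w, t)]} /\
    {ae P, forall w : T, (@lebesgue_measure R) [set t | K (w, t)] = 0%E} /\
    (forall t : R, 0 < t -> P [set w | K (w, t)] = 0%E) /\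
    (forall w : T, bdry0 (mtl_sem B (fun t => X t w) phi) `<=` [set t | K (w, t)]).
Proof.
move=> _ mX hcont dens mB nullB phi wf.
have [N [mN PN0 hN]] := hcont.
have contN : forall w, ~ N w -> {within `[0, +oo[, continuous (fun t : R => X t w)}.
  by move=> w nN; apply: contrapT => nc; apply: nN; apply: hN.
have negN : P.-negligible N by exists N; split.
set L := alist phi.
have hL : forall p, List.In p L -> 0 <= p.2 by move=> p; apply: alist_ge0.
set U := Ul X B N L.
have mU : measurable U by apply: Ul_meas.
pose K := [set z : T * R | z.2 = 0 \/ (N z.1 /\ 0 <= z.2) \/ U z].
exists K; split.
  have -> : K = (setT `*` [set 0]) `|` (N `*` [set t | 0 <= t]) `|` U.
    apply/seteqP; split => -[w t]; rewrite /K /=.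
      by move=> [->|[[h1 h2]|h]]; [left; left|left; right|right].
    by move=> [[[_ ->]|[h1 h2]]|h]; [left|right; left|right; right].
  apply: measurableU => //; apply: measurableU.
    by apply: measurableX => //; exact: measurable_set1.
  apply: measurableX => //.
  have -> : [set t : R | 0 <= t] = `[0, +oo[%classic.
    by apply/seteqP; split => t; rewrite /= in_itv /= andbT.
  exact: measurable_itv.
split.
  move=> -[w t]; rewrite /K /= => -[->|[[_ t0]|[p _ [_ [t0 _]]]]]; split => //=;
    rewrite in_itv /= andbT //; exact: ltW.
split.
  exists N; split => // w /= ncl; apply: contrapT => nN; apply: ncl.
  have -> : [set t | K (w, t)] = [set t | t = 0 \/ exists2 p, List.In p L &
      (0 <= t /\ bdry (B p.1) (X (t + p.2) w))].
    apply/seteqP; split => t; rewrite /K /=.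
      move=> [->|[[h _]|[p pL [_ [t0 h]]]]]; [by left|by []|].
      by right; exists p => //; split => //; exact: ltW.
    move=> [->|[p pL [t0 h]]]; first by left.
    have [->|t0'] := eqVneq t 0; first by left.
    by right; right; exists p => //; split => //; split => //; rewrite lt_neqAle eq_sym t0' t0.
  exact: (@closed_C R AP B (fun t => X t w) (contN w nN) L hL).
split.
  have hae : {ae P, forall w, (@lebesgue_measure R) (xsection U w) = 0%E}.
    by apply: Ul_ae.
  apply: negligibleS (negligibleU negN hae) => w /= hw.
  apply: contrapT => /not_orP[nN nU]; apply: hw.
  have nU' : (@lebesgue_measure R) (xsection U w) = 0%E by apply: contrapT.
  have -> : [set t | K (w, t)] = xsection U w `|` [set 0].
    apply/seteqP; split => t; rewrite /K /xsection /= inE.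
      by move=> [->|[[h _]|h]]; [right|by []|left].
    by move=> [h|->]; [right; right|left].
  have mxs : measurable (xsection U w) := measurable_xsection w mU.
  have m1 : measurable [set (0 : R)] := measurable_set1 0.
  have l1 := lebesgue_measure_set1 (0 : R).
  by rewrite measureU0.
split.
  move=> t t0; apply: measure_negligible.
    have -> : [set w | K (w, t)] = ysection K t.
      by apply/seteqP; split => w; rewrite /ysection /= inE.
    apply: measurable_ysection.
    have -> : K = (setT `*` [set 0]) `|` (N `*` [set t | 0 <= t]) `|` U.
      apply/seteqP; split => -[w' t']; rewrite /K /=.
        by move=> [->|[[h1 h2]|h]]; [left; left|left; right|right].
      by move=> [[[_ ->]|[h1 h2]]|h]; [left|right; left|right; right].
    apply: measurableU => //; apply: measurableU.
      by apply: measurableX => //; exact: measurable_set1.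
    apply: measurableX => //.
    have -> : [set t : R | 0 <= t] = `[0, +oo[%classic.
      by apply/seteqP; split => t'; rewrite /= in_itv /= andbT.
    exact: measurable_itv.
  have hUn : P.-negligible [set w | U (w, t)] by apply: Ul_null.
  apply: negligibleS (negligibleU negN hUn).
  move=> w; rewrite /K /= => -[t00|[[h _]|h]]; [by move: t0; rewrite t00 ltxx|left|right] => //.
move=> w t hb; have t0 : 0 <= t by case: hb.
rewrite /K /=.
have [nN|nN] := pselect (N w); first by right; left.
have [p [pL pb]] := bd_mtl (contN w nN) wf (bdry0_bd hb).
have [->|t0'] := eqVneq t 0; first by left.
right; right; exists p => //; split => //; split => //.
by rewrite lt_neqAle eq_sym t0' t0.
Qed.
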